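(* Let $G$ be a connected simple graph on $n\ge2$ vertices $v_1,\dots,v_n$, let $\alpha$ be a real number, and suppose the vertices are labeled so that $({}^\alpha m)_1\ge({}^\alpha m)_2\ge\cdots\ge({}^\alpha m)_n$. Let $N=\max_{i\sim j} d_j^\alpha/d_i^\alpha$. Then for $1\le i\le n$, \[\rho(A(G))\le \frac{({}^\alpha m)_i-N+\sqrt{(({}^\alpha m)_i+N)^2+4N\sum_{k=1}^{i-1}\big(({}^\alpha m)_k-({}^\alpha m)_i\big)}}{2}.\] Equality holds if and only if $({}^\alpha m)_1=\cdots=({}^\alpha m)_n$, or there is $t$ with $2\le t\le i$ such that: if $\alpha=0$, $G$ is a bidegreed graph with $d_1=\cdots=d_{t-1}=n-1>d_t=\cdots=d_n$; if $\alpha>0$, $G$ is a bidegreed graph with $({}^\alpha m)_1>({}^\alpha m)_2=\cdots=({}^\alpha m)_n$ and $d_1=n-1>d_2=\cdots=d_n$. (For $\alpha<0$ only the first alternative occurs.)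
   Context: $A(G)$ is the adjacency matrix of $G$; $i\sim j$ means $v_i,v_j$ are adjacent; $d_i$ is the degree of $v_i$. The generalized average degree of $v_i$ is $({}^\alpha m)_i=\frac{\sum_{j\sim i}d_j^\alpha}{d_i^\alpha}$. $\rho(\cdot)$ is the spectral radius (largest eigenvalue for symmetric nonnegative matrices). A bidegreed graph is one whose vertex degrees take exactly two distinct values. An empty sum equals $0$. *)

(* Defs.v *)
From Stdlib Require Import Reals List Arith Relations.
Import ListNotations.
Open Scope R_scope.

(* A simple graph on vertices 0..n-1 (vertex v_{k+1} of the paper is k here),
   given by a boolean adjacency relation. *)
Definition simple_graph (n : nat) (adj : nat -> nat -> bool) : Prop :=
  (forall i j, adj i j = adj j i) /\
  (forall i, adj i i = false) /\
  (forall i j, adj i j = true -> (i < n)%nat /\ (j < n)%nat).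

Definition connected (n : nat) (adj : nat -> nat -> bool) : Prop :=
  forall u v, (u < n)%nat -> (v < n)%nat ->
    clos_refl_trans nat (fun x y => adj x y = true) u v.

Definition sumR (l : list R) : R := fold_right Rplus 0 l.

Definition deg (n : nat) (adj : nat -> nat -> bool) (i : nat) : nat :=
  length (filter (fun j => adj i j) (seq 0 n)).

Definition dpow (n : nat) (adj : nat -> nat -> bool) (alpha : R) (i : nat) : R :=
  Rpower (INR (deg n adj i)) alpha.

Definition gavg (n : nat) (adj : nat -> nat -> bool) (alpha : R) (i : nat) : R :=
  sumR (map (fun j => if adj i j then dpow n adj alpha j else 0) (seq 0 n))
  / dpow n adj alpha i.

(* N = max over adjacent (ordered) pairs i ~ j of d_j^alpha / d_i^alpha.
   All ratios are positive, so folding Rmax from 0 gives the maximum whenever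
   there is at least one edge. *)
Definition Nmax (n : nat) (adj : nat -> nat -> bool) (alpha : R) : R :=
  fold_right Rmax 0
    (flat_map (fun i =>
       map (fun j => dpow n adj alpha j / dpow n adj alpha i)
           (filter (fun j => adj i j) (seq 0 n)))
     (seq 0 n)).

Definition Aentry (adj : nat -> nat -> bool) (i j : nat) : R :=
  if adj i j then 1 else 0.

Definition is_eigenvalue (n : nat) (adj : nat -> nat -> bool) (lam : R) : Prop :=
  exists x : nat -> R,
    (exists j, (j < n)%nat /\ x j <> 0) /\
    forall i, (i < n)%nat ->
      sumR (map (fun j => Aentry adj i j * x j) (seq 0 n)) = lam * x i.

(* rho(A(G)) : the largest eigenvalue (A(G) is real symmetric, so all its
   eigenvalues are real). *)
Definition is_spectral_radius (n : nat) (adj : nat -> nat -> bool) (r : R) : Prop :=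
  is_eigenvalue n adj r /\ forall lam, is_eigenvalue n adj lam -> lam <= r.

Definition bidegreed (n : nat) (adj : nat -> nat -> bool) : Prop :=
  exists a b : nat, a <> b /\
    (forall i, (i < n)%nat -> deg n adj i = a \/ deg n adj i = b) /\
    (exists i, (i < n)%nat /\ deg n adj i = a) /\
    (exists i, (i < n)%nat /\ deg n adj i = b).

(* Main.v *)
Require Import Defs.
From Stdlib Require Import Reals List Arith Relations Lra Lia Psatz Wf_nat Classical.
Import ListNotations.
Open Scope R_scope.

Notation SR n f := (sumR (map f (seq 0 n))).

Lemma sumR_app l1 l2 : sumR (l1 ++ l2) = sumR l1 + sumR l2.
Proof. induction l1; simpl; [lra|]. unfold sumR in *; simpl. rewrite IHl1. lra. Qed.

Lemma SR_S n f : SR (S n) f = SR n f + f n.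
Proof. rewrite seq_S, map_app, sumR_app. replace (sumR (map f [(0+n)%nat])) with (f n) by (unfold sumR; simpl; lra). reflexivity. Qed.

Lemma SR_0 f : SR 0 f = 0.
Proof. reflexivity. Qed.

Lemma SR_ext n f g : (forall k, (k < n)%nat -> f k = g k) -> SR n f = SR n g.
Proof. induction n; intros H; [reflexivity|]. rewrite !SR_S, IHn, H; auto. Qed.

Lemma SR_le n f g : (forall k, (k < n)%nat -> f k <= g k) -> SR n f <= SR n g.
Proof. induction n; intros H; [simpl; lra|]. rewrite !SR_S. pose proof (H n (Nat.lt_succ_diag_r n)).
  assert (SR n f <= SR n g) by (apply IHn; auto). lra. Qed.

Lemma SR_plus n f g : SR n (fun k => f k + g k) = SR n f + SR n g.
Proof. induction n; [simpl; lra|]. rewrite !SR_S, IHn. lra. Qed.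

Lemma SR_minus n f g : SR n (fun k => f k - g k) = SR n f - SR n g.
Proof. induction n; [simpl; lra|]. rewrite !SR_S, IHn. lra. Qed.

Lemma SR_scal n c f : SR n (fun k => c * f k) = c * SR n f.
Proof. induction n; [simpl; lra|]. rewrite !SR_S, IHn. lra. Qed.

Lemma SR_const n c : SR n (fun _ => c) = INR n * c.
Proof. induction n; [simpl; lra|]. rewrite !SR_S, IHn, S_INR. lra. Qed.

Lemma SR_nonneg n f : (forall k, (k < n)%nat -> 0 <= f k) -> 0 <= SR n f.
Proof. intros H. replace 0 with (SR n (fun _ => 0)). apply SR_le; auto.
  rewrite SR_const; lra. Qed.

Lemma SR_term n f k : (forall k, (k < n)%nat -> 0 <= f k) -> (k < n)%nat -> f k <= SR n f.
Proof. induction n; intros H Hk; [lia|]. rewrite SR_S.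
  assert (0 <= SR n f) by (apply SR_nonneg; auto).
  destruct (Nat.eq_dec k n). subst. lra.
  assert (f k <= SR n f) by (apply IHn; auto; lia). pose proof (H n ltac:(lia)). lra. Qed.

Lemma SR_zero n f : (forall k, (k < n)%nat -> 0 <= f k) -> SR n f = 0 ->
  forall k, (k < n)%nat -> f k = 0.
Proof. intros H H0 k Hk. pose proof (SR_term n f k H Hk). pose proof (H k Hk). lra. Qed.

Lemma SR_abs n f : Rabs (SR n f) <= SR n (fun k => Rabs (f k)).
Proof. induction n; [simpl; rewrite Rabs_R0; lra|]. rewrite !SR_S.
  pose proof (Rabs_triang (SR n f) (f n)). lra. Qed.

Lemma SR_indic n t c : (t <= n)%nat -> SR n (fun k => if Nat.ltb k t then c else 0) = INR t * c.
Proof. induction n; intros H.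
  - assert (t = 0%nat) by lia. subst. simpl. lra.
  - rewrite SR_S. destruct (Nat.eq_dec t (S n)).
    + subst. rewrite (SR_ext n _ (fun _ => c)). rewrite SR_const.
      rewrite (proj2 (Nat.ltb_lt _ _)) by lia. rewrite S_INR. lra.
      intros k Hk. rewrite (proj2 (Nat.ltb_lt _ _)) by lia. auto.
    + rewrite IHn by lia. rewrite (proj2 (Nat.ltb_ge _ _)) by lia. lra. Qed.

Lemma SR_trunc n i g : (i <= n)%nat -> SR n (fun k => if Nat.ltb k i then g k else 0) = SR i g.
Proof. induction n; intros H.
  - assert (i = 0%nat) by lia. subst. reflexivity.
  - destruct (Nat.eq_dec i (S n)).
    + subst. apply SR_ext. intros k Hk. rewrite (proj2 (Nat.ltb_lt _ _)) by lia. auto.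
    + rewrite SR_S, IHn by lia. rewrite (proj2 (Nat.ltb_ge _ _)) by lia. lra. Qed.

Lemma SR_skip n k g : (k < n)%nat -> SR n (fun j => if Nat.eqb j k then 0 else g j) = SR n g - g k.
Proof. induction n; intros H; [lia|]. rewrite !SR_S. destruct (Nat.eq_dec k n).
  - subst. rewrite Nat.eqb_refl. rewrite (SR_ext n _ g). lra.
    intros j Hj. rewrite (proj2 (Nat.eqb_neq _ _)) by lia. auto.
  - rewrite IHn by lia. rewrite (proj2 (Nat.eqb_neq _ _)) by lia. lra. Qed.

Lemma len_filter n (f : nat -> bool) :
  INR (length (filter f (seq 0 n))) = SR n (fun j => if f j then 1 else 0).
Proof. induction n; [reflexivity|]. rewrite SR_S, seq_S, filter_app, length_app, plus_INR, IHn.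
  simpl. destruct (f n); simpl; lra. Qed.

Lemma argmax n (f : nat -> R) : (0 < n)%nat -> exists k, (k < n)%nat /\ forall j, (j < n)%nat -> f j <= f k.
Proof. induction n; intros H; [lia|]. destruct (Nat.eq_dec n 0).
  - subst. exists 0%nat. split; [lia|]. intros j Hj. assert (j = 0%nat) by lia. subst; lra.
  - destruct IHn as [k [Hk Hm]]; [lia|]. destruct (Rle_dec (f n) (f k)).
    + exists k. split; [lia|]. intros j Hj. destruct (Nat.eq_dec j n). subst; auto. apply Hm; lia.
    + exists n. split; [lia|]. intros j Hj. destruct (Nat.eq_dec j n). subst; lra.
      pose proof (Hm j ltac:(lia)). lra. Qed.

Lemma rt_prop (Rel : nat -> nat -> Prop) (P : nat -> Prop) :
  (forall x y, P x -> Rel x y -> P y) -> forall u v, clos_refl_trans nat Rel u v -> P u -> P v.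
Proof. intros H u v Huv. induction Huv; eauto. Qed.

Lemma abstract_main (n i : nat) (b : nat -> nat -> R) (r : nat -> R) (N th rho : R) (w : nat -> R)
  (Hb0 : forall k j, 0 <= b k j) (HbN : forall k j, j <> k -> b k j <= N) (Hbkk : forall k, b k k = 0)
  (Hr : forall k, r k = SR n (b k))
  (Hhi : forall k, (i <= k)%nat -> (k < n)%nat -> r k <= r i)
  (Hlo : forall k, (k < i)%nat -> r i <= r k)
  (Hi : (i < n)%nat)
  (Hth : th * (th + N) = r i * (th + N) + N * SR i (fun k => r k - r i))
  (HthN : 0 < th + N) (Hth0 : 0 <= th)
  (Heig : forall k, (k < n)%nat -> rho * w k = SR n (fun j => b k j * w j))
  (Hw : exists j, (j < n)%nat /\ w j <> 0) :
  rho <= th /\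
  (rho = th -> forall Rel : nat -> nat -> Prop,
     (forall x y, Rel x y -> (x < n)%nat /\ (y < n)%nat /\ 0 < b x y) ->
     (forall u v, (u < n)%nat -> (v < n)%nat -> clos_refl_trans nat Rel u v) ->
     forall k, (k < n)%nat -> ((i <= k)%nat -> r k = r i) /\
        forall j, (j < i)%nat -> j <> k -> r i < r j -> b k j = N).
Proof.
  set (q := / (th + N)).
  assert (Hq : q * (th + N) = 1) by (unfold q; field; lra).
  assert (Hq0 : 0 < q) by (unfold q; apply Rinv_0_lt_compat; lra).
  set (S := SR i (fun k => r k - r i)).
  set (e := fun k => if Nat.ltb k i then (r k - r i) * q else 0).
  assert (He0 : forall k, 0 <= e k).
  { intros k. unfold e. destruct (Nat.ltb k i) eqn:E.
    - apply Nat.ltb_lt in E. pose proof (Hlo k E). nra.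
    - lra. }
  set (E := SR n e).
  assert (HE : E = S * q).
  { unfold E, e. rewrite SR_trunc by lia. unfold S.
    rewrite Rmult_comm, <- (SR_scal i q (fun k => r k - r i)). apply SR_ext. intros; ring. }
  assert (Hkey : forall k, r k + N * (E - e k) - th * (1 + e k)
                   = if Nat.ltb k i then 0 else r k - r i).
  assert (Hz : r i + N * S * q - th = 0).
  { transitivity (q * (r i * (th + N) + N * S - th * (th + N)) + (1 - q * (th + N)) * (r i - th)).
    ring. rewrite Hth. unfold S. rewrite Hq. ring. }
  { intros k. rewrite HE. unfold e. destruct (Nat.ltb k i).
    - transitivity ((r k - r i) * (1 - q * (th + N)) + (r i + N * S * q - th)).
      ring. rewrite Hz, Hq. ring.
    - transitivity (r k - r i + (r i + N * S * q - th)). ring. rewrite Hz. ring. }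
  assert (Hkey' : forall k, (k < n)%nat -> r k + N * (E - e k) <= th * (1 + e k)).
  { intros k Hk. pose proof (Hkey k). destruct (Nat.ltb k i) eqn:Ek.
    - lra.
    - apply Nat.ltb_ge in Ek. pose proof (Hhi k Ek Hk). lra. }
  set (x := fun k => 1 + e k).
  assert (Hx : forall k, 0 < x k) by (intros k; unfold x; pose proof (He0 k); lra).
  set (u := fun k => w k / x k).
  assert (Hwu : forall k, w k = x k * u k) by (intros k; unfold u; field; pose proof (Hx k); lra).
  destruct (argmax n (fun k => Rabs (u k)) ltac:(lia)) as [k0 [Hk0 Hmax]].
  set (M := Rabs (u k0)).
  assert (HM : 0 < M).
  { destruct Hw as [j [Hj Hwj]]. pose proof (Hmax j Hj). simpl in H.
    assert (u j <> 0). { intro Hc. apply Hwj. rewrite Hwu, Hc. ring. }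
    pose proof (Rabs_pos_lt _ H0). unfold M. lra. }
  assert (Hbe : forall k, (k < n)%nat -> SR n (fun j => b k j * e j) <= N * (E - e k)).
  { intros k Hk. rewrite (SR_ext n _ (fun j => if Nat.eqb j k then 0 else b k j * e j)).
    - replace (N * (E - e k)) with (SR n (fun j => if Nat.eqb j k then 0 else N * e j)).
      + apply SR_le. intros j Hj. destruct (Nat.eqb j k) eqn:Ej. lra.
        apply Nat.eqb_neq in Ej. pose proof (HbN k j Ej). pose proof (He0 j). nra.
      + rewrite SR_skip by auto. unfold E. rewrite SR_scal. ring.
    - intros j Hj. destruct (Nat.eqb j k) eqn:Ej; auto. apply Nat.eqb_eq in Ej. subst. rewrite Hbkk. ring. }
  assert (Hbx : forall k, SR n (fun j => b k j * x j) = r k + SR n (fun j => b k j * e j)).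
  { intros k. rewrite Hr. rewrite <- SR_plus. apply SR_ext. intros; unfold x; ring. }
  assert (Hchain : forall k, (k < n)%nat ->
     Rabs rho * x k * Rabs (u k) <= SR n (fun j => b k j * x j * Rabs (u j))).
  { intros k Hk. replace (Rabs rho * x k * Rabs (u k)) with (Rabs (rho * w k)).
    - rewrite Heig by auto. eapply Rle_trans. apply SR_abs. right. apply SR_ext. intros j Hj.
      rewrite Hwu, !Rabs_mult. rewrite (Rabs_right (b k j)) by (apply Rle_ge; auto).
      rewrite (Rabs_right (x j)) by (apply Rle_ge; left; auto). ring.
    - rewrite Hwu, !Rabs_mult. rewrite (Rabs_right (x k)) by (apply Rle_ge; left; auto). ring. }
  assert (Hchain2 : forall k, SR n (fun j => b k j * x j * Rabs (u j)) <= M * SR n (fun j => b k j * x j)).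
  { intros k. rewrite <- SR_scal. apply SR_le. intros j Hj. pose proof (Hmax j Hj). simpl in H.
    pose proof (Hb0 k j). pose proof (Hx j). fold M in H.
    assert (0 <= b k j * x j) by nra. nra. }
  assert (Hbound : Rabs rho <= th).
  { pose proof (Hchain k0 Hk0). pose proof (Hchain2 k0). rewrite Hbx in H0.
    pose proof (Hbe k0 Hk0). pose proof (Hkey' k0 Hk0). fold M in H.
    assert (Rabs rho * x k0 * M <= th * x k0 * M).
    { apply Rle_trans with (M * (r k0 + SR n (fun j => b k0 j * e j))). lra.
      unfold x. nra. }
    pose proof (Hx k0). 
    apply Rmult_le_reg_r with (x k0 * M). nra. nra. }
  split. { pose proof (Rle_abs rho). lra. }
  intros Heq Rel HRel Hconn.
  assert (Habs : Rabs rho = th) by (rewrite Heq; apply Rabs_right; lra).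
  assert (Hatmax : forall k, (k < n)%nat -> Rabs (u k) = M ->
     (forall j, (j < n)%nat -> 0 < b k j -> Rabs (u j) = M) /\
     SR n (fun j => b k j * e j) = N * (E - e k) /\
     r k + N * (E - e k) = th * (1 + e k)).
  { intros k Hk HuM. pose proof (Hchain k Hk). pose proof (Hchain2 k). rewrite Hbx in H0.
    pose proof (Hbe k Hk). pose proof (Hkey' k Hk). rewrite Habs, HuM in H.
    assert (Hx1 : th * x k * M = M * (th * (1 + e k))) by (unfold x; ring).
    assert (E1 : M * (r k + SR n (fun j => b k j * e j)) <= M * (r k + N * (E - e k))) by nra.
    assert (E2 : M * (r k + N * (E - e k)) <= M * (th * (1 + e k))) by nra.
    assert (Q1 : SR n (fun j => b k j * x j * Rabs (u j)) = M * (r k + SR n (fun j => b k j * e j))) by lra.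
    assert (Q2 : M * (r k + SR n (fun j => b k j * e j)) = M * (r k + N * (E - e k))) by lra.
    assert (Q3 : M * (r k + N * (E - e k)) = M * (th * (1 + e k))) by lra.
    split; [|split].
    - intros j Hj Hb. 
      assert (Z : SR n (fun j => b k j * x j * (M - Rabs (u j))) = 0).
      { replace (SR n (fun j => b k j * x j * (M - Rabs (u j)))) with
          (M * SR n (fun j => b k j * x j) - SR n (fun j => b k j * x j * Rabs (u j))).
        rewrite Hbx. lra. rewrite <- SR_scal, <- SR_minus. apply SR_ext; intros; ring. }
      assert (NN : forall j, (j < n)%nat -> 0 <= b k j * x j * (M - Rabs (u j))).
      { intros j' Hj'. pose proof (Hmax j' Hj'). simpl in H3. fold M in H3. pose proof (Hx j').
        pose proof (Hb0 k j'). assert (0 <= b k j' * x j') by nra. nra. }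
      pose proof (SR_zero _ _ NN Z j Hj). pose proof (Hx j). 
      assert (0 < b k j * x j) by nra.
      assert (M - Rabs (u j) = 0). { apply Rmult_eq_reg_l with (b k j * x j). lra. lra. }
      lra.
    - apply Rmult_eq_reg_l with M; [|lra]. nra.
    - apply Rmult_eq_reg_l with M; [|lra]. lra. }
  assert (Hall : forall k, (k < n)%nat -> Rabs (u k) = M).
  { intros k Hk. 
    apply (rt_prop Rel (fun v => (v < n)%nat /\ Rabs (u v) = M)) with (u := k0) (v := k);
      [| apply Hconn; auto | split; auto].
    intros a c [Ha Hua] Hac. destruct (HRel a c Hac) as [_ [Hc Hbac]].
    split; auto. apply (proj1 (Hatmax a Ha Hua)); auto. }
  intros k Hk. destruct (Hatmax k Hk (Hall k Hk)) as [_ [Hs Hr2]]. split.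
  - intros Hik. pose proof (Hkey k). rewrite (proj2 (Nat.ltb_ge _ _)) in H by auto. lra.
  - intros j Hj Hjk Hrj.
    assert (Z : SR n (fun j => if Nat.eqb j k then 0 else (N - b k j) * e j) = 0).
    { rewrite (SR_ext n _ (fun j => N * e j - b k j * e j - (if Nat.eqb j k then N * e j else 0))).
      - rewrite !SR_minus, SR_scal. fold E. rewrite Hs.
        rewrite (SR_ext n _ (fun j => if Nat.ltb j (Datatypes.S k) then (if Nat.ltb j k then 0 else N * e j) else 0)).
        rewrite SR_trunc by lia. rewrite SR_S. rewrite Nat.ltb_irrefl.
        rewrite (SR_ext k _ (fun _ => 0)). rewrite SR_const. ring.
        intros a Ha. rewrite (proj2 (Nat.ltb_lt _ _)) by auto. auto.
        intros a Ha. destruct (Nat.eqb a k) eqn:Ea.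
        + apply Nat.eqb_eq in Ea; subst. rewrite Nat.ltb_irrefl, (proj2 (Nat.ltb_lt _ _)) by lia. auto.
        + apply Nat.eqb_neq in Ea. destruct (Nat.ltb a (Datatypes.S k)) eqn:E1; destruct (Nat.ltb a k) eqn:E2; auto.
          apply Nat.ltb_lt in E1; apply Nat.ltb_ge in E2; lia.
      - intros a Ha. destruct (Nat.eqb a k) eqn:Ea; [|ring].
        apply Nat.eqb_eq in Ea; subst. rewrite Hbkk. ring. }
    assert (NN : forall a, (a < n)%nat -> 0 <= (if Nat.eqb a k then 0 else (N - b k a) * e a)).
    { intros a Ha. destruct (Nat.eqb a k) eqn:Ea. lra. apply Nat.eqb_neq in Ea.
      pose proof (HbN k a Ea). pose proof (He0 a). nra. }
    pose proof (SR_zero _ _ NN Z j ltac:(lia)). simpl in H.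
    rewrite (proj2 (Nat.eqb_neq _ _)) in H by auto.
    assert (0 < e j). { unfold e. rewrite (proj2 (Nat.ltb_lt _ _)) by auto. nra. }
    assert (N - b k j = 0). { apply Rmult_eq_reg_r with (e j); lra. }
    lra.
Qed.

Lemma dpow_pos n adj a k : 0 < dpow n adj a k.
Proof. unfold dpow, Rpower. apply exp_pos. Qed.

Lemma gavg_eq n adj a k : gavg n adj a k =
  SR n (fun j => Aentry adj k j * (dpow n adj a j / dpow n adj a k)).
Proof. unfold gavg. pose proof (dpow_pos n adj a k).
  unfold Rdiv at 1. rewrite Rmult_comm, <- SR_scal. apply SR_ext. intros j _.
  unfold Aentry. destruct (adj k j); field; lra. Qed.

Lemma deg_sum n adj k : INR (deg n adj k) = SR n (fun j => Aentry adj k j).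
Proof. unfold deg. rewrite len_filter. reflexivity. Qed.

Lemma fold_max_ge l y : In y l -> y <= fold_right Rmax 0 l.
Proof. induction l; simpl; [tauto|]. intros [H|H]. subst; apply Rmax_l.
  eapply Rle_trans; [apply IHl; auto| apply Rmax_r]. Qed.

Lemma fold_max_le l c : (forall y, In y l -> y <= c) -> 0 <= c -> fold_right Rmax 0 l <= c.
Proof. induction l; simpl; intros H Hc; auto. apply Rmax_lub; auto. Qed.

Lemma fold_max_nonneg l : 0 <= fold_right Rmax 0 l.
Proof. induction l; simpl; [lra|]. eapply Rle_trans; [apply IHl| apply Rmax_r]. Qed.

Lemma Nmax_ge n adj a k j : adj k j = true -> (k < n)%nat -> (j < n)%nat ->
  dpow n adj a j / dpow n adj a k <= Nmax n adj a.
Proof. intros H Hk Hj. unfold Nmax. apply fold_max_ge. apply in_flat_map. exists k. split.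
  apply in_seq; lia. apply (in_map (fun j0 => dpow n adj a j0 / dpow n adj a k)). apply filter_In. split; auto. apply in_seq; lia. Qed.

Lemma Nmax_le n adj a c : (forall k j, adj k j = true -> (k < n)%nat -> (j < n)%nat ->
  dpow n adj a j / dpow n adj a k <= c) -> 0 <= c -> Nmax n adj a <= c.
Proof. intros H Hc. unfold Nmax. apply fold_max_le; auto. intros y Hy.
  apply in_flat_map in Hy. destruct Hy as [k [Hk Hy]]. apply in_map_iff in Hy.
  destruct Hy as [j [Hj Hin]]. subst. apply filter_In in Hin. destruct Hin as [Hin Ha].
  apply in_seq in Hk. apply in_seq in Hin. apply H; auto; lia. Qed.

Lemma Nmax_nonneg n adj a : 0 <= Nmax n adj a.
Proof. apply fold_max_nonneg. Qed.

Lemma first_step (Rel : nat -> nat -> Prop) x y : clos_refl_trans nat Rel x y -> x <> y -> exists z, Rel x z.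
Proof. intros H. apply clos_rt_rt1n in H. destruct H; [tauto|]. eauto. Qed.

Lemma has_nb n adj k : connected n adj -> (2 <= n)%nat -> (k < n)%nat -> exists z, adj k z = true.
Proof. intros Hc Hn Hk. set (v := if Nat.eqb k 0 then 1%nat else 0%nat).
  assert (v < n /\ v <> k)%nat. { unfold v. destruct (Nat.eqb k 0) eqn:E.
    apply Nat.eqb_eq in E; lia. apply Nat.eqb_neq in E; lia. }
  apply (first_step (fun x y => adj x y = true) k v); [apply Hc; lia | lia]. Qed.

Lemma Aentry_01 adj k j : 0 <= Aentry adj k j <= 1.
Proof. unfold Aentry; destruct (adj k j); lra. Qed.

Lemma deg_pos n adj k : simple_graph n adj -> connected n adj -> (2 <= n)%nat -> (k < n)%nat ->
  1 <= INR (deg n adj k).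
Proof. intros Hg Hc Hn Hk. destruct (has_nb n adj k Hc Hn Hk) as [z Hz].
  destruct Hg as [_ [_ Hb]]. destruct (Hb _ _ Hz).
  rewrite deg_sum. replace 1 with (Aentry adj k z) by (unfold Aentry; rewrite Hz; auto).
  apply (SR_term n (fun j => Aentry adj k j)); auto. intros; apply Aentry_01. Qed.

Lemma SR_notk n k : (k < n)%nat -> SR n (fun j => if Nat.eqb j k then 0 else 1) = INR n - 1.
Proof. intros H. rewrite SR_skip, SR_const by auto. ring. Qed.

Lemma deg_full n adj k : simple_graph n adj -> (k < n)%nat ->
  (forall j, (j < n)%nat -> j <> k -> adj k j = true) -> deg n adj k = (n - 1)%nat.
Proof. intros Hg Hk H. apply INR_eq. rewrite minus_INR by lia. rewrite deg_sum.
  simpl (INR 1). rewrite <- (SR_notk n k) by auto. apply SR_ext. intros j Hj. unfold Aentry.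
  destruct (Nat.eqb j k) eqn:E. apply Nat.eqb_eq in E; subst. destruct Hg as [_ [Hd _]]. rewrite Hd; auto.
  apply Nat.eqb_neq in E. rewrite H; auto. Qed.

Lemma deg_bound n adj k : simple_graph n adj -> (k < n)%nat ->
  SR n (fun j => (if Nat.eqb j k then 0 else 1) - Aentry adj k j) = INR (n - 1) - INR (deg n adj k)
  /\ forall j, (j < n)%nat -> 0 <= (if Nat.eqb j k then 0 else 1) - Aentry adj k j.
Proof. intros Hg Hk. split.
  - rewrite SR_minus, SR_notk, <- deg_sum, minus_INR by lia. simpl. ring.
  - intros j Hj. destruct (Nat.eqb j k) eqn:E. apply Nat.eqb_eq in E; subst.
    destruct Hg as [_ [Hd _]]. unfold Aentry. rewrite Hd. lra. pose proof (Aentry_01 adj k j). lra. Qed.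

Lemma deg_le n adj k : simple_graph n adj -> (k < n)%nat -> (deg n adj k <= n - 1)%nat.
Proof. intros Hg Hk. destruct (deg_bound n adj k Hg Hk) as [H1 H2].
  pose proof (SR_nonneg _ _ H2). apply INR_le. lra. Qed.

Lemma deg_full_inv n adj k : simple_graph n adj -> (k < n)%nat -> deg n adj k = (n - 1)%nat ->
  forall j, (j < n)%nat -> j <> k -> adj k j = true.
Proof. intros Hg Hk Hd j Hj Hjk. destruct (deg_bound n adj k Hg Hk) as [H1 H2].
  rewrite Hd in H1. replace (INR (n-1) - INR (n-1)) with 0 in H1 by ring.
  pose proof (SR_zero _ _ H2 H1 j Hj). simpl in H.
  rewrite (proj2 (Nat.eqb_neq _ _)) in H by auto. unfold Aentry in H.
  destruct (adj k j); auto. lra. Qed.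

Lemma L_mdeg n adj a k : (forall j, adj k j = true -> dpow n adj a j = dpow n adj a k) ->
  gavg n adj a k = INR (deg n adj k).
Proof. intros H. rewrite gavg_eq, deg_sum. apply SR_ext. intros j _. unfold Aentry.
  destruct (adj k j) eqn:E; [|ring]. rewrite H by auto. pose proof (dpow_pos n adj a k). field. lra. Qed.

Lemma row_split n adj t k (a b : R) : simple_graph n adj -> (t <= n)%nat -> (k < n)%nat ->
  (forall l, (l < t)%nat -> deg n adj l = (n - 1)%nat) ->
  SR n (fun j => Aentry adj k j * (if Nat.ltb j t then a else b)) =
  if Nat.ltb k t then (INR t - 1) * a + (INR n - INR t) * b
  else INR t * a + (INR (deg n adj k) - INR t) * b.
Proof. intros Hg Ht Hk Hdeg.
  set (X := SR n (fun j => Aentry adj k j * (if Nat.ltb j t then 1 else 0))).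
  assert (H1 : SR n (fun j => Aentry adj k j * (if Nat.ltb j t then a else b)) =
    a * X + b * (INR (deg n adj k) - X)).
  { rewrite deg_sum. unfold X. rewrite <- !SR_scal, <- SR_minus, <- SR_scal, <- SR_plus.
    apply SR_ext. intros j _. destruct (Nat.ltb j t); ring. }
  rewrite H1. destruct Hg as [Hs [Hd Hb]].
  destruct (Nat.ltb k t) eqn:Ekt.
  - apply Nat.ltb_lt in Ekt.
    assert (HY : INR (deg n adj k) - X = INR n - INR t).
    { rewrite deg_sum. unfold X. rewrite <- SR_minus.
      rewrite (SR_ext n _ (fun j => 1 - (if Nat.ltb j t then 1 else 0))).
      rewrite SR_minus, SR_const, SR_indic by auto. ring.
      intros j Hj. destruct (Nat.ltb j t) eqn:E. ring. apply Nat.ltb_ge in E.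
      unfold Aentry. rewrite (deg_full_inv n adj k) by (auto; try split; auto; lia). ring. }
    assert (HX : X = INR t - 1).
    { pose proof (Hdeg k Ekt). rewrite H, minus_INR in HY by lia. simpl in HY. lra. }
    rewrite HY, HX. ring.
  - apply Nat.ltb_ge in Ekt.
    assert (HX : X = INR t).
    { unfold X. rewrite (SR_ext n _ (fun j => if Nat.ltb j t then 1 else 0)).
      rewrite SR_indic by auto. ring.
      intros j Hj. destruct (Nat.ltb j t) eqn:E; [|ring]. apply Nat.ltb_lt in E.
      unfold Aentry. rewrite Hs. rewrite (deg_full_inv n adj j) by (auto; try split; auto; lia). ring. }
    rewrite HX. ring.
Qed.

Lemma LB n adj t d rho : simple_graph n adj -> (1 <= t)%nat -> (t < n)%nat ->
  (forall l, (l < t)%nat -> deg n adj l = (n - 1)%nat) ->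
  (forall k, (t <= k)%nat -> (k < n)%nat -> deg n adj k = d) -> (d < n - 1)%nat ->
  is_spectral_radius n adj rho ->
  (INR d - 1 + sqrt ((INR d + 1) ^ 2 + 4 * (INR t * (INR n - 1 - INR d)))) / 2 <= rho.
Proof. intros Hg Ht1 Htn Hdt Hdk Hd [_ Hmax].
  set (arg := (INR d + 1) ^ 2 + 4 * (INR t * (INR n - 1 - INR d))).
  assert (Harg : 0 <= arg).
  { unfold arg. apply lt_INR in Hd. rewrite minus_INR in Hd by lia. simpl in Hd.
    pose proof (pos_INR t). pose proof (pos_INR d). nra. }
  set (s := sqrt arg). assert (Hs : s * s = arg) by (apply sqrt_sqrt; auto).
  set (th := (INR d - 1 + s) / 2).
  apply Hmax. exists (fun j => if Nat.ltb j t then INR n - INR t else th - INR t + 1). split.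
  - exists 0%nat. split; [lia|]. rewrite (proj2 (Nat.ltb_lt _ _)) by lia.
    apply lt_INR in Htn. lra.
  - intros k Hk. rewrite (row_split n adj t k) by (auto; lia).
    destruct (Nat.ltb k t) eqn:E.
    + ring.
    + apply Nat.ltb_ge in E. rewrite Hdk by auto. unfold th.
      unfold arg in Hs. nra.
Qed.

Lemma dpow_zero n adj k : dpow n adj 0 k = 1.
Proof. unfold dpow, Rpower. rewrite Rmult_0_l. apply exp_0. Qed.

Lemma dpow_inj n adj a k l : a <> 0 -> 1 <= INR (deg n adj k) -> 1 <= INR (deg n adj l) ->
  dpow n adj a k = dpow n adj a l -> deg n adj k = deg n adj l.
Proof. unfold dpow, Rpower. intros Ha Hk Hl H. apply exp_inv in H.
  apply INR_eq. apply ln_inv; try lra. apply Rmult_eq_reg_l with a; auto. Qed.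

Lemma dpow_deg n adj a k l : deg n adj k = deg n adj l -> dpow n adj a k = dpow n adj a l.
Proof. unfold dpow. intros H; rewrite H; auto. Qed.

Lemma dpow_lt n adj a k l : 0 < a -> 1 <= INR (deg n adj k) ->
  INR (deg n adj k) < INR (deg n adj l) -> dpow n adj a k < dpow n adj a l.
Proof. unfold dpow, Rpower. intros Ha Hk Hkl. apply exp_increasing.
  apply Rmult_lt_compat_l; auto. apply ln_increasing; lra. Qed.

Lemma dpow_lt_inv n adj a k l : 1 <= INR (deg n adj k) ->
  INR (deg n adj k) < INR (deg n adj l) -> dpow n adj a k < dpow n adj a l -> 0 < a.
Proof. unfold dpow, Rpower. intros Hk Hkl H. apply exp_lt_inv in H.
  assert (ln (INR (deg n adj k)) < ln (INR (deg n adj l))) by (apply ln_increasing; lra).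
  destruct (Rtotal_order a 0) as [Ha|[Ha|Ha]]; auto; subst; nra. Qed.

Theorem theorem3 (n : nat) (adj : nat -> nat -> bool) (alpha : R)
  (Hg : simple_graph n adj) (Hc : connected n adj) (Hn : (2 <= n)%nat)
  (Hord : forall k l, (k <= l)%nat -> (l < n)%nat ->
            gavg n adj alpha l <= gavg n adj alpha k)
  (i : nat) (Hi : (i < n)%nat) (rho : R) (Hrho : is_spectral_radius n adj rho) :
  let m := gavg n adj alpha in
  let N := Nmax n adj alpha in
  let bound :=
    (m i - N + sqrt ((m i + N) ^ 2
        + 4 * N * sumR (map (fun k => m k - m i) (seq 0 i)))) / 2 in
  rho <= bound /\
  (rho = bound <->
     (forall k l, (k < n)%nat -> (l < n)%nat -> m k = m l) \/
     (exists t, (1 <= t)%nat /\ (t <= i)%nat /\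
        ((alpha = 0 /\ bidegreed n adj /\
          (forall k, (k < t)%nat -> deg n adj k = (n - 1)%nat) /\
          (forall k, (t <= k)%nat -> (k < n)%nat ->
             deg n adj k = deg n adj t /\ (deg n adj t < n - 1)%nat)) \/
         (alpha > 0 /\ bidegreed n adj /\
          m 0%nat > m 1%nat /\
          (forall k, (1 <= k)%nat -> (k < n)%nat -> m k = m 1%nat) /\
          deg n adj 0 = (n - 1)%nat /\
          (forall k, (1 <= k)%nat -> (k < n)%nat ->
             deg n adj k = deg n adj 1 /\ (deg n adj 1 < n - 1)%nat))))).
Proof.
  intros m N bound.
  set (p := dpow n adj alpha).
  assert (Hp : forall k, 0 < p k) by (intros; apply dpow_pos).
  pose proof Hg as [Hsym [Hirr Hbd]].
  assert (HN0 : 0 < N).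
  { destruct (has_nb n adj 0 Hc Hn ltac:(lia)) as [z Hz]. destruct (Hbd _ _ Hz).
    pose proof (Nmax_ge n adj alpha 0 z Hz H H0). fold p N in H1.
    pose proof (Hp z). pose proof (Hp 0%nat). assert (0 < p z / p 0%nat) by (apply Rdiv_lt_0_compat; auto). lra. }
  set (S := SR i (fun k => m k - m i)).
  assert (HS : 0 <= S).
  { apply SR_nonneg. intros k Hk. pose proof (Hord k i ltac:(lia) Hi). unfold m. lra. }
  assert (Hm0 : forall k, 0 <= m k).
  { intros k. unfold m. rewrite gavg_eq. apply SR_nonneg. intros j _.
    pose proof (Aentry_01 adj k j). pose proof (Hp j). pose proof (Hp k).
    assert (0 < p j / p k) by (apply Rdiv_lt_0_compat; auto). fold p. nra. }
  set (arg := (m i + N) ^ 2 + 4 * N * S).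
  assert (Harg : 0 <= arg) by (unfold arg; pose proof (Hm0 i); nra).
  set (sq := sqrt arg).
  assert (Hsq : sq * sq = arg) by (apply sqrt_sqrt; auto).
  assert (Hsq1 : m i + N <= sq).
  { unfold sq. rewrite <- (sqrt_square (m i + N)) by (pose proof (Hm0 i); lra).
    apply sqrt_le_1_alt. unfold arg. nra. }
  assert (Hbdef : bound = (m i - N + sq) / 2) by reflexivity.
  assert (Hth : bound * (bound + N) = m i * (bound + N) + N * S).
  { rewrite Hbdef. unfold arg in Hsq. nra. }
  assert (Hth0 : 0 <= bound) by (rewrite Hbdef; pose proof (Hm0 i); lra).
  pose proof Hrho as Hrho2.
  destruct Hrho as [[z [Hz Heigz]] Hrmax].
  pose proof (abstract_main n i (fun k j => Aentry adj k j * (p j / p k)) m N bound rho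
     (fun k => z k / p k)) as AM.
  destruct AM as [Hle Heq].
  - intros k j. pose proof (Aentry_01 adj k j). pose proof (Hp j). pose proof (Hp k).
    assert (0 < p j / p k) by (apply Rdiv_lt_0_compat; auto). nra.
  - intros k j Hjk. unfold Aentry. destruct (adj k j) eqn:E.
    + destruct (Hbd _ _ E). rewrite Rmult_1_l. apply Nmax_ge; auto.
    + lra.
  - intros k. unfold Aentry. rewrite Hirr. ring.
  - intros k. unfold m. apply gavg_eq.
  - intros k Hik Hk. apply Hord; auto.
  - intros k Hk. apply Hord; lia.
  - exact Hi.
  - exact Hth.
  - lra.
  - exact Hth0.
  - intros k Hk. transitivity (/ p k * (rho * z k)). pose proof (Hp k). field. lra.
    rewrite <- (Heigz k Hk). rewrite <- SR_scal.
    apply SR_ext. intros j _. pose proof (Hp j). pose proof (Hp k). field. lra.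
  - destruct Hz as [j [Hj Hzj]]. exists j. split; auto. pose proof (Hp j).
    intro Hc0. apply Hzj. apply (f_equal (fun x => x * p j)) in Hc0. unfold Rdiv in Hc0.
    rewrite Rmult_assoc, Rinv_l, Rmult_1_r, Rmult_0_l in Hc0 by lra. auto.
  - split; [exact Hle|].

    assert (HdegP : forall k, (k < n)%nat -> 1 <= INR (deg n adj k)) by (intros; apply deg_pos; auto).
    assert (HmP : forall k, (k < n)%nat -> SR n (fun j => Aentry adj k j * p j) = m k * p k).
    { intros k Hk. unfold m. rewrite gavg_eq. rewrite Rmult_comm, <- SR_scal. apply SR_ext.
      intros j _. fold p. pose proof (Hp k). field. lra. }
    split.
    +
      intros Hrb.
      assert (HC := Heq Hrb (fun x y => adj x y = true)).
      assert (HC' : forall k, (k < n)%nat -> ((i <= k)%nat -> m k = m i) /\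
          forall j, (j < i)%nat -> j <> k -> m i < m j -> Aentry adj k j * (p j / p k) = N).
      { apply HC. intros x y Hxy. destruct (Hbd _ _ Hxy). split; auto. split; auto.
        unfold Aentry; rewrite Hxy, Rmult_1_l. apply Rdiv_lt_0_compat; auto.
        intros u v Hu Hv. apply Hc; auto. }
      clear HC.
      destruct (classic (exists j, (j < i)%nat /\ m i < m j)) as [Hex|Hnex].
      2:{ left. assert (forall k, (k < n)%nat -> m k = m i).
          { intros k Hk. destruct (le_lt_dec i k). apply (proj1 (HC' k Hk)); auto.
            pose proof (Hord k i ltac:(lia) Hi). fold m in H.
            destruct (Rle_lt_or_eq_dec _ _ H) as [Hl|Hl]; auto. exfalso; apply Hnex; eauto. }
          intros k l Hk Hl. rewrite (H k Hk), (H l Hl); auto. }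
      right.
      destruct (dec_inh_nat_subset_has_unique_least_element (fun k => m k <= m i))
        as [t [[Hti Htl] _]].
      { intros k. apply classic. }
      { exists i. lra. }
      assert (Hti' : (t <= i)%nat) by (apply Htl; lra).
      destruct Hex as [j0 [Hj0 Hmj0]].
      assert (Hlt : forall k, (k < t)%nat -> m i < m k).
      { intros k Hk. apply Rnot_le_lt. intro Hc0. pose proof (Htl k Hc0). lia. }
      assert (Ht1 : (1 <= t)%nat).
      { destruct t; [|lia]. exfalso. pose proof (Hord 0%nat j0 ltac:(lia) ltac:(lia)). fold m in H. lra. }
      assert (Heqt : forall k, (t <= k)%nat -> (k < n)%nat -> m k = m i).
      { intros k Htk Hk. destruct (le_lt_dec i k). apply (proj1 (HC' k Hk)); auto.
        pose proof (Hord t k Htk Hk). pose proof (Hord k i ltac:(lia) Hi). fold m in H, H0. lra. }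
      assert (Hfull : forall j k, (j < t)%nat -> (k < n)%nat -> k <> j -> adj k j = true /\ p j / p k = N).
      { intros j k Hj Hk Hkj. pose proof (proj2 (HC' k Hk) j ltac:(lia) (not_eq_sym Hkj) (Hlt j Hj)).
        unfold Aentry in H. destruct (adj k j). split; auto; lra. lra. }
      assert (Hdegt : forall j, (j < t)%nat -> deg n adj j = (n - 1)%nat).
      { intros j Hj. apply deg_full; auto. lia. intros k Hk Hkj. rewrite Hsym. apply Hfull; auto. }
      assert (Hm0i : m i < m 0%nat) by (apply Hlt; lia).
      exists t. split; [auto|]. split; [auto|].
      destruct (Req_dec alpha 0) as [Ha0|Ha0].
      * left. split; [auto|].
        assert (Hmd : forall k, (k < n)%nat -> m k = INR (deg n adj k)).
        { intros k Hk. unfold m. apply L_mdeg. intros j _. subst alpha. rewrite !dpow_zero. auto. }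
        assert (Hdk : forall k, (t <= k)%nat -> (k < n)%nat -> deg n adj k = deg n adj t).
        { intros k Htk Hk. apply INR_eq. rewrite <- !Hmd by lia. rewrite (Heqt k), (Heqt t) by lia. auto. }
        assert (Hdlt : (deg n adj t < n - 1)%nat).
        { apply INR_lt. rewrite <- Hmd by lia. rewrite <- (Hdegt 0%nat) by lia. rewrite <- Hmd by lia.
          rewrite Heqt by lia. auto. }
        split.
        { exists (n - 1)%nat, (deg n adj t). split; [lia|]. split.
          - intros k Hk. destruct (le_lt_dec t k). right; auto. left; auto.
          - split. exists 0%nat. split; [lia|]. apply Hdegt; lia. exists t. split; [lia|auto]. }
        split; auto.
      * right.
        assert (HpN : forall k, (t <= k)%nat -> (k < n)%nat -> p k = p 0%nat / N).
        { intros k Htk Hk. destruct (Hfull 0%nat k ltac:(lia) Hk ltac:(lia)) as [_ H].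
          pose proof (Hp k). pose proof (Hp 0%nat). rewrite <- H. field. lra. }
        assert (Hpt : forall k, (k < t)%nat -> p k = p 0%nat).
        { intros k Hk. apply dpow_deg. rewrite !Hdegt by lia. auto. }
        destruct (Req_dec N 1) as [HN1|HN1].
        { exfalso.
          assert (Hpall : forall k, (k < n)%nat -> p k = p 0%nat).
          { intros k Hk. destruct (le_lt_dec t k). rewrite HpN, HN1 by auto. field. auto. }
          assert (Hdall : forall k, (k < n)%nat -> deg n adj k = (n - 1)%nat).
          { intros k Hk. rewrite <- (Hdegt 0%nat) by lia. apply (dpow_inj n adj alpha); [exact Ha0 | apply HdegP; lia | apply HdegP; lia | apply Hpall; auto]. }
          assert (Hmd : forall k, (k < n)%nat -> m k = INR (deg n adj k)).
          { intros k Hk. unfold m. apply L_mdeg. intros j Hkj. destruct (Hbd _ _ Hkj).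
            fold p. rewrite (Hpall j), (Hpall k) by auto. auto. }
          rewrite !Hmd, !Hdall in Hm0i by lia. lra. }
        assert (Ht : t = 1%nat).
        { destruct (Nat.eq_dec t 1); auto. exfalso.
          destruct (Hfull 1%nat 0%nat ltac:(lia) ltac:(lia) ltac:(lia)) as [_ H1].
          destruct (Hfull 0%nat 1%nat ltac:(lia) ltac:(lia) ltac:(lia)) as [_ H2].
          pose proof (Hp 0%nat). pose proof (Hp 1%nat).
          assert (N * N = 1). { rewrite <- H1 at 1. rewrite <- H2. field. split; lra. }
          nra. }
        subst t.
        destruct (Hfull 0%nat 1%nat ltac:(lia) ltac:(lia) ltac:(lia)) as [Ha10 _].
        assert (Hr01 : p 1%nat / p 0%nat <= N).
        { apply Nmax_ge; try lia. rewrite Hsym; auto. }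
        rewrite (HpN 1%nat) in Hr01 by lia.
        assert (HN1' : 1 < N).
        { pose proof (Hp 0%nat). assert (p 0%nat / N / p 0%nat = / N) by (field; lra).
          rewrite H0 in Hr01. assert (1 <= N * N).
          { apply Rmult_le_reg_r with (/ N). apply Rinv_0_lt_compat; lra.
            replace (N * N * / N) with N by (field; lra). lra. }
          nra. }
        assert (Hdk : forall k, (1 <= k)%nat -> (k < n)%nat -> deg n adj k = deg n adj 1).
        { intros k H1k Hk. apply (dpow_inj n adj alpha); [exact Ha0 | apply HdegP; lia | apply HdegP; lia |].
          fold p. rewrite (HpN k), (HpN 1%nat) by lia. auto. }
        assert (Hd1 : (deg n adj 1 < n - 1)%nat).
        { pose proof (deg_le n adj 1 Hg ltac:(lia)). destruct (Nat.eq_dec (deg n adj 1) (n - 1)); [|lia].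
          exfalso. assert (p 1%nat = p 0%nat). { apply dpow_deg. rewrite e, Hdegt; auto. }
          rewrite HpN in H0 by lia. pose proof (Hp 0%nat).
          apply HN1. apply Rmult_eq_reg_l with (p 0%nat); [|lra].
          assert (E1 : p 0%nat / N * N = p 0%nat) by (field; lra). rewrite H0 in E1. lra. }
        assert (Hapos : 0 < alpha).
        { apply (dpow_lt_inv n adj alpha 1 0). apply HdegP; lia.
          rewrite (Hdegt 0%nat) by lia. apply lt_INR; auto.
          fold p. rewrite HpN by lia. pose proof (Hp 0%nat).
          apply Rmult_lt_reg_r with N. lra. unfold Rdiv. rewrite Rmult_assoc, Rinv_l by lra. nra. }
        split; [lra|].
        split.
        { exists (n - 1)%nat, (deg n adj 1). split; [lia|]. split.
          - intros k Hk. destruct (le_lt_dec 1 k). right; auto. left. apply Hdegt; lia.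
          - split. exists 0%nat. split; [lia|]. apply Hdegt; lia. exists 1%nat. split; [lia|auto]. }
        split. { rewrite (Heqt 1%nat) by lia. lra. }
        split. { intros k H1k Hk. rewrite (Heqt k), (Heqt 1%nat) by lia. auto. }
        split. { apply Hdegt; lia. }
        intros k H1k Hk. split; auto.
    +

      intros [Hall | [t [Ht1 [Hti [[Ha0 [Hbi [Hd1 Hd2]]] | [Hpos [Hbi [Hm01 [Hmk [Hd0 Hd1]]]]]]]]]].
      * assert (HSz : S = 0).
        { unfold S. rewrite (SR_ext i _ (fun _ => 0)). rewrite SR_const. ring.
          intros k Hk. rewrite (Hall k i) by lia. ring. }
        assert (Hb : bound = m i).
        { rewrite Hbdef. unfold sq, arg. rewrite HSz, Rmult_0_r, Rplus_0_r.
          replace ((m i + N) ^ 2) with ((m i + N) * (m i + N)) by ring.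
          rewrite sqrt_square by (pose proof (Hm0 i); lra). field. }
        apply Rle_antisym; [exact Hle|]. rewrite Hb. apply Hrmax. exists p. split.
        { exists 0%nat. split; [lia|]. pose proof (Hp 0%nat). lra. }
        intros k Hk. rewrite HmP by auto. rewrite (Hall k i) by auto. ring.
      * assert (Hp1 : forall k, p k = 1) by (intros; unfold p; rewrite Ha0; apply dpow_zero).
        assert (Hmd : forall k, m k = INR (deg n adj k)).
        { intros k. unfold m. apply L_mdeg. intros j _. fold p. rewrite (Hp1 j), (Hp1 k). auto. }
        set (d := deg n adj t).
        assert (Hdd : forall k, (t <= k)%nat -> (k < n)%nat -> deg n adj k = d) by (intros; apply Hd2; auto).
        assert (Hdlt : (d < n - 1)%nat) by (apply (Hd2 t); lia).
        assert (HNv : N = 1).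
        { apply Rle_antisym.
          - apply Nmax_le; [|lra]. intros k j _ _ _. fold p. rewrite (Hp1 j), (Hp1 k). lra.
          - replace 1 with (p 1%nat / p 0%nat) by (rewrite (Hp1 1%nat), (Hp1 0%nat); field).
            apply Nmax_ge; try lia. apply (deg_full_inv n adj 0); auto; lia. }
        assert (Hmi : m i = INR d) by (rewrite Hmd, Hdd by lia; auto).
        assert (HSv : S = INR t * (INR n - 1 - INR d)).
        { unfold S. rewrite (SR_ext i _ (fun k => if Nat.ltb k t then (INR n - 1 - INR d) else 0)).
          apply SR_indic; auto.
          intros k Hk. rewrite Hmi, Hmd. destruct (Nat.ltb k t) eqn:E.
          - apply Nat.ltb_lt in E. rewrite Hd1, minus_INR by lia. simpl. ring.
          - apply Nat.ltb_ge in E. rewrite Hdd by lia. ring. }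
        assert (Hbv : bound = (INR d - 1 + sqrt ((INR d + 1) ^ 2 + 4 * (INR t * (INR n - 1 - INR d)))) / 2).
        { rewrite Hbdef. unfold sq, arg. rewrite HSv, HNv, Hmi. rewrite Rmult_1_r. auto. }
        apply Rle_antisym; [exact Hle|]. rewrite Hbv.
        apply (LB n adj t d rho Hg Ht1 ltac:(lia) Hd1 Hdd Hdlt Hrho2).
      * set (d := deg n adj 1).
        assert (Hdd : forall k, (1 <= k)%nat -> (k < n)%nat -> deg n adj k = d) by (intros; apply Hd1; auto).
        assert (Hdlt : (d < n - 1)%nat) by (apply (Hd1 1%nat); lia).
        assert (Hpk : forall k, (1 <= k)%nat -> (k < n)%nat -> p k = p 1%nat).
        { intros k H1 H2. apply dpow_deg. rewrite Hdd; auto. }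
        assert (Hdpos : 1 <= INR d) by (apply HdegP; lia).
        assert (Hc1 : p 1%nat < p 0%nat).
        { apply dpow_lt; auto. rewrite Hd0. apply lt_INR. auto. }
        pose proof (Hp 0%nat) as Hp0. pose proof (Hp 1%nat) as Hp1.
        set (c := p 0%nat / p 1%nat).
        assert (Hcgt : 1 < c).
        { unfold c. apply Rmult_lt_reg_r with (p 1%nat); auto. unfold Rdiv. rewrite Rmult_assoc, Rinv_l by lra. lra. }
        assert (Hpf : forall j, (j < n)%nat -> p j = if Nat.ltb j 1 then p 0%nat else p 1%nat).
        { intros j Hj. destruct (Nat.ltb j 1) eqn:E. apply Nat.ltb_lt in E. assert (j = 0%nat) by lia. subst; auto.
          apply Nat.ltb_ge in E. apply Hpk; auto. }
        assert (Hd0' : forall l, (l < 1)%nat -> deg n adj l = (n - 1)%nat).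
        { intros l Hl. assert (l = 0%nat) by lia. subst; auto. }
        assert (Hm0v : m 0%nat * p 0%nat = (INR n - 1) * p 1%nat).
        { rewrite <- HmP by lia. rewrite (SR_ext n _ (fun j => Aentry adj 0 j * (if Nat.ltb j 1 then p 0%nat else p 1%nat))).
          rewrite row_split by (auto; lia). replace (Nat.ltb 0 1) with true by reflexivity. simpl INR. ring.
          intros j Hj. rewrite Hpf; auto. }
        assert (Hm1v : m 1%nat * p 1%nat = p 0%nat + (INR d - 1) * p 1%nat).
        { rewrite <- HmP by lia. rewrite (SR_ext n _ (fun j => Aentry adj 1 j * (if Nat.ltb j 1 then p 0%nat else p 1%nat))).
          rewrite row_split by (auto; lia). replace (Nat.ltb 1 1) with false by reflexivity. simpl INR. fold d. ring.
          intros j Hj. rewrite Hpf; auto. }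
        assert (Ha10 : adj 1%nat 0%nat = true).
        { rewrite Hsym. apply (deg_full_inv n adj 0); auto; lia. }
        assert (HNv : N = c).
        { apply Rle_antisym.
          - apply Nmax_le; [|lra]. intros k j _ Hk Hj. fold p. rewrite (Hpf j), (Hpf k) by auto.
            destruct (Nat.ltb j 1); destruct (Nat.ltb k 1).
            + replace (p 0%nat / p 0%nat) with 1 by (field; lra). lra.
            + unfold c; lra.
            + apply Rle_trans with 1. apply Rmult_le_reg_r with (p 0%nat); auto.
              unfold Rdiv. rewrite Rmult_assoc, Rinv_l by lra. lra. lra.
            + replace (p 1%nat / p 1%nat) with 1 by (field; lra). lra.
          - unfold c. apply Nmax_ge; auto; lia. }
        assert (Hmi : m i = m 1%nat) by (apply Hmk; lia).
        assert (HSv : S = m 0%nat - m 1%nat).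
        { unfold S. rewrite (SR_ext i _ (fun k => if Nat.ltb k 1 then (m 0%nat - m 1%nat) else 0)).
          rewrite SR_indic by lia. simpl. ring.
          intros k Hk. rewrite Hmi. destruct (Nat.ltb k 1) eqn:E.
          - apply Nat.ltb_lt in E. assert (k = 0%nat) by lia. subst; auto.
          - apply Nat.ltb_ge in E. rewrite Hmk by lia. ring. }
        assert (Hm1' : m 1%nat = c + INR d - 1).
        { apply Rmult_eq_reg_r with (p 1%nat); [|lra]. rewrite Hm1v. unfold c. field. lra. }
        assert (Hcm0 : c * m 0%nat = INR n - 1).
        { unfold c. apply Rmult_eq_reg_r with (p 0%nat); [|lra].
          replace (p 0%nat / p 1%nat * m 0%nat * p 0%nat) with (p 0%nat / p 1%nat * (m 0%nat * p 0%nat)) by ring.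
          rewrite Hm0v. field. lra. }
        assert (Hbv : bound = (INR d - 1 + sqrt ((INR d + 1) ^ 2 + 4 * (INR 1 * (INR n - 1 - INR d)))) / 2).
        { rewrite Hbdef. unfold sq, arg. rewrite HSv, HNv, Hmi.
          replace ((m 1%nat + c) ^ 2 + 4 * c * (m 0%nat - m 1%nat))
            with ((INR d + 1) ^ 2 + 4 * (INR 1 * (INR n - 1 - INR d))).
          rewrite Hm1'. field.
          rewrite Hm1'. simpl INR. nra. }
        apply Rle_antisym; [exact Hle|]. rewrite Hbv.
        apply (LB n adj 1 d rho Hg ltac:(lia) ltac:(lia) Hd0' Hdd Hdlt Hrho2).
Qed.
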